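(* There is an absolute constant $c$ such that for every graph $G$ with $V(G)=[n]$ and every $k\ge1$, with $H=G^k$ and $(P,N)=R[H]$ as defined below, there is a CNF formula consistent with $(P,N)$ with at most $\chi(G)^k n^{c}$ clauses.
   Context: $G^k$ is the $k$-fold lexicographic product; its vertices are tuples $\vec u=(u_1,\dots,u_k)\in V(G)^k$, and $\vec u\vec v\in E(G^k)$ iff there is $i$ with $u_j=v_j$ for $j<i$ and $u_iv_i\in E(G)$. For $u\in[n]$ let $\mathrm{enc}(u)=0^{u-1}10^{n-u}\in\{0,1\}^n$, and for an edge $uv$ let $\mathrm{enc}(uv)\in\{0,1\}^n$ have 1s exactly at positions $u$ and $v$. Samples lie in $\{0,1\}^{nk}$ (variables $z(i,u)$, $i\in[k]$, $u\in[n]$, in $k$ blocks). Negative samples: $N=\{\mathrm{enc}(u_1)\cdots\mathrm{enc}(u_k):\vec u\in V(H)\}$. Positive samples: $P=\{\mathrm{enc}(u_1)\cdots\mathrm{enc}(u_{i-1})\,\mathrm{enc}(u_iv)\,\mathrm{enc}(u_{i+1})\cdots\mathrm{enc}(u_k):\vec u\in V(H),\ i\in[k],\ u_iv\in E(G)\}$. A formula is consistent if it is true on all of $P$ and false on all of $N$. $\chi$ is the chromatic number. *)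

(* Defs.v *)
From mathcomp Require Import all_boot.
Set Implicit Arguments. Unset Strict Implicit. Unset Printing Implicit Defensive.

(* A graph on vertex set [n] is represented by 'I_n (vertex u in [n] is the
   ordinal u-1) with a symmetric irreflexive adjacency relation G : rel 'I_n. *)
Definition simple_graph n (G : rel 'I_n) : Prop :=
  symmetric G /\ irreflexive G.

Definition lexprod_edge n k (G : rel 'I_n) (u v : 'I_k -> 'I_n) : Prop :=
  exists i : 'I_k, (forall j : 'I_k, j < i -> u j = v j) /\ G (u i) (v i).

(* Proper m-colouring (edges between distinct vertices get distinct colours;
   for a loopless graph this is the usual notion). *)
Definition colorable n (G : rel 'I_n) (m : nat) : bool :=
  [exists f : {ffun 'I_n -> 'I_m},
     [forall u, forall v, (u != v) ==> G u v ==> (f u != f v)]].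

Lemma colorable_ex n (G : rel 'I_n) : exists m, colorable G m.
Proof.
exists n; apply/existsP; exists [ffun u => u].
apply/forallP=> u; apply/forallP=> v; rewrite !ffunE.
by apply/implyP=> H; apply/implyP.
Qed.

Definition chi n (G : rel 'I_n) : nat := ex_minn (colorable_ex G).

(* Samples: assignments to the variables z(i,u), i in [k], u in [n]. *)
Definition sample k n := ('I_k * 'I_n)%type -> bool.

Definition literal k n := (('I_k * 'I_n) * bool)%type.
Definition clause k n := seq (literal k n).
Definition cnf k n := seq (clause k n).

Definition eval_lit k n (a : sample k n) (l : literal k n) : bool := a l.1 == l.2.
Definition eval_clause k n (a : sample k n) (C : clause k n) : bool :=
  has (eval_lit a) C.
Definition eval_cnf k n (a : sample k n) (F : cnf k n) : bool :=
  all (eval_clause a) F.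

(* Negative sample enc(u_1)...enc(u_k) for a vertex u of H = G^k. *)
Definition neg_sample k n (u : 'I_k -> 'I_n) : sample k n :=
  fun p => u p.1 == p.2.

(* Positive sample: block i replaced by enc(u_i v). *)
Definition pos_sample k n (u : 'I_k -> 'I_n) (i : 'I_k) (v : 'I_n) : sample k n :=
  fun p => if p.1 == i then (p.2 == u i) || (p.2 == v) else u p.1 == p.2.

Definition is_neg k n (a : sample k n) : Prop :=
  exists u : 'I_k -> 'I_n, a =1 neg_sample u.

Definition is_pos k n (G : rel 'I_n) (a : sample k n) : Prop :=
  exists (u : 'I_k -> 'I_n) (i : 'I_k) (v : 'I_n),
    G (u i) v /\ a =1 pos_sample u i v.

Definition consistent k n (G : rel 'I_n) (F : cnf k n) : Prop :=
  (forall a, is_pos G a -> eval_cnf a F) /\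
  (forall a, is_neg a -> ~~ eval_cnf a F).

(* Main.v *)
Require Import Defs.
From mathcomp Require Import all_boot.

Section Aux.
Variables (k n m : nat) (f : 'I_n -> 'I_m).

Definition clause_of (c : {ffun 'I_k -> 'I_m}) : clause k n :=
  map (fun p => (p, true)) (filter (fun p : 'I_k * 'I_n => f p.2 != c p.1) (enum predT)).

Definition theF : cnf k n := map clause_of (enum predT).

Lemma eval_clause_ofP (a : sample k n) (c : {ffun 'I_k -> 'I_m}) :
  reflect (exists p : 'I_k * 'I_n, f p.2 != c p.1 /\ a p) (eval_clause a (clause_of c)).
Proof.
rewrite /eval_clause /clause_of has_map.
apply: (iffP hasP) => [[p] | [p [H1 H2]]].
  by rewrite mem_filter => /andP [H _]; rewrite /eval_lit /= => /eqP E; exists p; rewrite E.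
by exists p; [rewrite mem_filter H1 mem_enum | rewrite /eval_lit /= H2].
Qed.
End Aux.

Theorem mainTheorem17 :
  exists c : nat,
    forall (n : nat) (G : rel 'I_n), simple_graph G ->
    forall k : nat, 1 <= k ->
    exists F : cnf k n,
      consistent G F /\ size F <= chi G ^ k * n ^ c.
Proof.
exists 0 => n G [Gsym Girr] k _.
rewrite /chi; case: ex_minnP => m /existsP [f /forallP Hf] _.
exists (@theF k n m f); split; last first.
  by rewrite expn0 muln1 /theF size_map -cardE card_ffun !card_ord.
split.
- move=> a [u [i [v [Huv Ha]]]].
  apply/allP => C /mapP [c _ ->]; apply/eval_clause_ofP.
  have Hne : u i != v by apply/eqP => E; move: Huv; rewrite E Girr.
  have Hfne : f (u i) != f v.
    by move: (Hf (u i)) => /forallP /(_ v); rewrite Hne Huv.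
  case: (eqVneq (f (u i)) (c i)) => E.
  + exists (i, v); split => /=; first by rewrite -E eq_sym.
    by rewrite Ha /pos_sample /= !eqxx orbT.
  + by exists (i, u i); split => //=; rewrite Ha /pos_sample /= !eqxx.
- move=> a [u Ha]; apply/negP => /allP /(_ (@clause_of k n m f [ffun i => f (u i)])).
  have -> : @clause_of k n m f [ffun i => f (u i)] \in @theF k n m f.
    by apply/mapP; exists [ffun i => f (u i)]; rewrite ?mem_enum.
  move=> /(_ isT) /eval_clause_ofP [p [H1 H2]].
  move: H2; rewrite Ha /neg_sample => /eqP E.
  by move: H1; rewrite ffunE E eqxx.
Qed.
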